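(* Let $\mathbb{H}\in\{\mathbb{R},\mathbb{C}\}$ and consider $\bm{y}=\bm{A}\bm{x}+\bm{w}$ with $\bm{A}\in\mathbb{H}^{m\times n}$ having i.i.d. entries $\mathcal{N}(0,1/m)$ (resp. $\mathcal{CN}(0,1/m)$), $\bm{x}\sim\mathcal{N}(\bm 0,\sigma_x^2\bm I)$ (resp. $\mathcal{CN}(\bm 0,\sigma_x^2\bm I)$), and $\bm{w}\sim\mathcal{N}(\bm 0,\sigma_w^2\bm I)$ (resp. $\mathcal{CN}(\bm 0,\sigma_w^2\bm I)$) with $\sigma_w^2=\delta\sigma_0^2$, where $\delta=m/n$ and $\sigma_0^2>0$ is constant. Let the asymptotic MSE of the MMSE estimator be $$\mathrm{Err}(\delta)=\frac{\delta}{2}\left[\left(-\sigma_w^2+c\sigma_x^2\right)+\sqrt{\left(\sigma_w^2+c\sigma_x^2\right)^2+4\sigma_w^2\sigma_x^2}\right],\qquad c=\frac{1-\delta}{\delta},\ \sigma_w^2=\delta\sigma_0^2,$$ and let $\delta^\dagger$ be the value of $\delta>0$ minimizing $\mathrm{Err}(\delta)$. Then $\delta^{\dagger}<2$. Moreover, if $\sigma_x^2<2\sigma_0^2$, then $\delta^{\dagger}<1$.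
   Context: $\delta=m/n$ is the normalized number of measurements; the asymptotic regime is $m,n\to\infty$ with $m/n\to\delta$, and the MSE is $\lim_{n\to\infty}\frac1n\mathbb{E}\|\bm x-\hat{\bm x}\|^2$. *)

(* Defs.v *)
From mathcomp Require Import all_boot all_order all_algebra.
Import Order.TTheory GRing.Theory Num.Theory.
Local Open Scope ring_scope.

Definition Err {R : rcfType} (sx2 s02 d : R) : R :=
  let sw2 := d * s02 in
  let c := (1 - d) / d in
  d / 2 * ((- sw2 + c * sx2) + Num.sqrt ((sw2 + c * sx2) ^+ 2 + 4 * sw2 * sx2)).

(* Main.v *)
Require Import Defs.
From mathcomp Require Import all_boot all_order all_algebra.
From mathcomp Require Import ring lra.
Import Order.TTheory GRing.Theory Num.Theory.
Local Open Scope ring_scope.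

Lemma Err_root (R : rcfType) (x s d : R) : 0 < x -> 0 < s -> 0 < d ->
  0 < Err x s d /\
  (Err x s d) ^+ 2 + (d ^+ 2 * s + (d - 1) * x) * Err x s d - d ^+ 2 * s * x = 0.
Proof.
move=> hx hs hd; rewrite /Err /=.
set c := (1 - d) / d.
have hc : d * c = 1 - d by rewrite /c; field; rewrite gt_eqF.
set Q := (_ ^+ 2 + _).
have hQ : 0 <= Q by rewrite /Q; apply: addr_ge0; [exact: sqr_ge0| apply: mulr_ge0; [apply: mulr_ge0; [by []| nra]| exact: ltW]].
have hS := sqr_sqrtr hQ.
have hS0 : 0 <= Num.sqrt Q by exact: sqrtr_ge0.
set S := Num.sqrt Q in hS hS0 *.
have key : S ^+ 2 - (- (d * s) + c * x) ^+ 2 = 4 * s * x.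
  rewrite hS /Q.
  transitivity (4 * s * x * (d * c + d)); first ring.
  by rewrite hc; ring.
split.
  apply: mulr_gt0; first by nra.
  nra.
have e : (d ^+ 2 * s + (d - 1) * x) = - d * (- (d * s) + c * x).
  have -> : (d - 1) * x = - (d * c) * x by rewrite hc; ring.
  ring.
rewrite e.
have -> : d ^+ 2 * s * x = d ^+ 2 / 4 * (4 * s * x) by field.
rewrite -key.
by field.
Qed.

Lemma root_cmp (R : rcfType) (F p q y : R) : 0 < F -> F ^+ 2 + p * F - q = 0 ->
  0 < q -> 0 < y -> 0 < y ^+ 2 + p * y - q -> F < y.
Proof.
move=> hF hr hq hy hg.
have hFp : 0 < F + p.
  have : 0 < F * (F + p) by nra.
  by rewrite pmulr_rgt0.
have : 0 < (y - F) * (y + F + p) by nra.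
rewrite pmulr_lgt0; last by nra.
by rewrite subr_gt0.
Qed.

Arguments Err_root {R x s d}.
Arguments root_cmp {R F p q y}.

Theorem proposition1 (R : rcfType) (sx2 s02 ddag : R) :
  0 < sx2 -> 0 < s02 -> 0 < ddag ->
  (forall d : R, 0 < d -> Err sx2 s02 ddag <= Err sx2 s02 d) ->
  ddag < 2 /\ (sx2 < 2 * s02 -> ddag < 1).
Proof.
move=> hx hs hd hmin.
set x := sx2 in hx hmin *; set s := s02 in hs hmin *; set d := ddag in hd hmin *.
suff H : 0 < 2 * d ^+ 2 * s + (d - 2) * x -> False.
  split.
    rewrite ltNge; apply/negP => h2; apply: H.
    have : 0 <= (d - 2) * x by apply: mulr_ge0; lra.
    have : 0 < d ^+ 2 * s by apply: mulr_gt0; [exact: exprn_gt0|].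
    lra.
  move=> hxs; rewrite ltNge; apply/negP => h1; apply: H.
  have : 1 <= d ^+ 2 by rewrite -(expr1n R 2); rewrite ler_pXn2r // ?nnegrE; lra.
  nra.
move=> hpos.
have [hF hr] := Err_root hx hs hd.
set F := Err x s d in hF hr.
have hq : 0 < d ^+ 2 * s * x by rewrite !mulr_gt0 // exprn_gt0.
have hK : 0 < 2 * d * s + x by rewrite addr_gt0 // !mulr_gt0.
set T := 2 * d * s * x / (2 * d * s + x).
have hT : 0 < T by rewrite /T; apply: divr_gt0 => //; rewrite !mulr_gt0.
have hgT : 0 < T ^+ 2 + (d ^+ 2 * s + (d - 1) * x) * T - d ^+ 2 * s * x.
  have -> : T ^+ 2 + (d ^+ 2 * s + (d - 1) * x) * T - d ^+ 2 * s * x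
     = d * s * x * x * (2 * d ^+ 2 * s + (d - 2) * x) / (2 * d * s + x) ^+ 2.
    rewrite /T; field; by rewrite gt_eqF.
  apply: divr_gt0; last by rewrite exprn_gt0.
  by rewrite !mulr_gt0.
have hFT := root_cmp hF hr hq hT hgT.
have hD : 0 < 2 * d * s * x - F * (2 * d * s + x).
  move: hFT; rewrite /T ltr_pdivlMr // => h; lra.
set D := 2 * d * s * x - F * (2 * d * s + x) in hD.
have hFx : F < x.
  apply: (root_cmp hF hr hq hx).
  have -> : x ^+ 2 + (d ^+ 2 * s + (d - 1) * x) * x - d ^+ 2 * s * x = d * x ^+ 2 by ring.
  by rewrite mulr_gt0 // exprn_gt0.
set M := s * (x - F).
have hM : 0 < M by rewrite /M mulr_gt0 // subr_gt0.
set h := D * d / (D + d * M).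
have hDM : 0 < D + d * M by rewrite addr_gt0 // mulr_gt0.
have hh : 0 < h by rewrite /h; apply: divr_gt0 => //; rewrite mulr_gt0.
have hhd : h < d.
  rewrite /h ltr_pdivrMr //.
  have : 0 < d * (d * M) by apply: mulr_gt0 => //; apply: mulr_gt0.
  have -> : d * (D + d * M) = D * d + d * (d * M) by ring.
  lra.
have hhM : h * M < D.
  rewrite /h mulrAC ltr_pdivrMr //.
  have : 0 < D * D by rewrite mulr_gt0.
  have -> : D * (D + d * M) = D * d * M + D * D by ring.
  lra.
have hd' : 0 < d - h by lra.
have [hF' hr'] := Err_root hx hs hd'.
have hq' : 0 < (d - h) ^+ 2 * s * x by rewrite !mulr_gt0 // exprn_gt0.
have hg' : 0 < F ^+ 2 + ((d - h) ^+ 2 * s + (d - h - 1) * x) * F - (d - h) ^+ 2 * s * x.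
  have -> : F ^+ 2 + ((d - h) ^+ 2 * s + (d - h - 1) * x) * F - (d - h) ^+ 2 * s * x
    = h * (D - h * M) + (F ^+ 2 + (d ^+ 2 * s + (d - 1) * x) * F - d ^+ 2 * s * x).
    rewrite /D /M; ring.
  by rewrite hr addr0 mulr_gt0 // subr_gt0.
have hlt := root_cmp hF' hr' hq' hF hg'.
move: (hmin _ hd'); rewrite -/F.
by rewrite leNgt hlt.
Qed.
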